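(* Fix $\mathbf{v}\in\mathbb{R}^{K+1}\setminus\{\mathbf{0}\}$ and $\bar{\mathbf{f}}\in\mathbb{C}^{n}\setminus\{\mathbf{0}\}$, and assume that the matrix $\mathbf{B}(\bar{\mathbf{f}},\mathbf{v})$ defined below is invertible. Then the first-order stationarity (KKT) condition of the unconstrained problem $\min_{\bar{\mathbf{f}},\mathbf{v}} f(\bar{\mathbf{f}},\mathbf{v})$ with respect to $\bar{\mathbf{f}}$, namely $\nabla_{\bar{\mathbf{f}}^*} f(\bar{\mathbf{f}},\mathbf{v})=\mathbf{0}$, holds if and only if $$\mathbf{B}(\bar{\mathbf{f}},\mathbf{v})^{-1}\mathbf{A}(\bar{\mathbf{f}},\mathbf{v})\,\bar{\mathbf{f}}=\lambda(\bar{\mathbf{f}},\mathbf{v})\,\bar{\mathbf{f}},$$ where $$\mathbf{A}(\bar{\mathbf{f}},\mathbf{v})=\lambda_{\mathrm{num}}\Big\{\sum_{j=1}^{K}\Big[R_{\mathrm{target},j}\Big(\tfrac{\mathbf{A}_j^{p}}{\bar{\mathbf{f}}^{H}\mathbf{A}_j^{p}\bar{\mathbf{f}}}+w_j\mathbf{L}_A\Big)+\bar R_{p,j}\tfrac{\mathbf{B}_j^{p}}{\bar{\mathbf{f}}^{H}\mathbf{B}_j^{p}\bar{\mathbf{f}}}+w_jC_j\mathbf{L}_B+w_j\bar R_{p,j}\mathbf{L}_B+C_j\tfrac{\mathbf{B}_j^{p}}{\bar{\mathbf{f}}^{H}\mathbf{B}_j^{p}\bar{\mathbf{f}}}\Big]+\eta_{\mathrm{mc}}\Big[R_{\mathrm{target,mc}}w_{K+1}\mathbf{L}_A+w_{K+1}C_{\mathrm{mc}}\mathbf{L}_B\Big]\Big\},$$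 $$\mathbf{B}(\bar{\mathbf{f}},\mathbf{v})=\lambda_{\mathrm{den}}\Big\{\sum_{j=1}^{K}\Big[R_{\mathrm{target},j}\Big(\tfrac{\mathbf{B}_j^{p}}{\bar{\mathbf{f}}^{H}\mathbf{B}_j^{p}\bar{\mathbf{f}}}+w_j\mathbf{L}_B\Big)+\bar R_{p,j}\tfrac{\mathbf{A}_j^{p}}{\bar{\mathbf{f}}^{H}\mathbf{A}_j^{p}\bar{\mathbf{f}}}+w_jC_j\mathbf{L}_A+w_j\bar R_{p,j}\mathbf{L}_A+C_j\tfrac{\mathbf{A}_j^{p}}{\bar{\mathbf{f}}^{H}\mathbf{A}_j^{p}\bar{\mathbf{f}}}\Big]+\eta_{\mathrm{mc}}\Big[R_{\mathrm{target,mc}}w_{K+1}\mathbf{L}_B+w_{K+1}C_{\mathrm{mc}}\mathbf{L}_A\Big]\Big\},$$ with all quantities $\lambda_{\mathrm{num}},\lambda_{\mathrm{den}},\lambda,w_j,C_j,C_{\mathrm{mc}},\bar R_{p,j},\mathbf{L}_A,\mathbf{L}_B$ evaluated at $(\bar{\mathbf{f}},\mathbf{v})$.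
   Context: Let $K\ge1$, $N_t\ge1$ be integers and $n:=N_t(K+1)$. For each $k\in\{1,\dots,K\}$ let $\mathbf{a}_k\in\mathbb{C}^{N_t}$ and $\gamma_k>0$; let $\sigma^2>0$, $P>0$, $\alpha>0$, $\eta_{\mathrm{mc}}>0$, and real numbers $R_{\mathrm{target},1},\dots,R_{\mathrm{target},K},R_{\mathrm{target,mc}}$ be given. Write $\mathrm{blkdiag}$ for a block-diagonal matrix with $K+1$ diagonal blocks of size $N_t\times N_t$, and $\mathbf{I}$ for the identity. Define the $n\times n$ matrices $\mathbf{A}_k^{c}=\mathrm{blkdiag}(\gamma_k\mathbf{a}_k\mathbf{a}_k^H,\dots,\gamma_k\mathbf{a}_k\mathbf{a}_k^H)+\frac{\sigma^2}{P}\mathbf{I}$, $\mathbf{B}_k^{c}=\mathbf{A}_k^{c}-\mathrm{blkdiag}(\gamma_k\mathbf{a}_k\mathbf{a}_k^H,0,\dots,0)$, $\mathbf{A}_k^{p}=\mathrm{blkdiag}(0,\gamma_k\mathbf{a}_k\mathbf{a}_k^H,\dots,\gamma_k\mathbf{a}_k\mathbf{a}_k^H)+\frac{\sigma^2}{P}\mathbf{I}$, $\mathbf{B}_k^{p}=\mathbf{A}_k^{p}-\mathrm{blkdiag}(0,\dots,0,\gamma_k\mathbf{a}_k\mathbf{a}_k^H,0,\dots,0)$ where the nonzero block is the $(k+1)$-th block. For $\bar{\mathbf{f}}\in\mathbb{C}^n\setminus\{\mathbf 0\}$ define $\bar R_{c,k}(\bar{\mathbf{f}})=\log_2\frac{\bar{\mathbf{f}}^H\mathbf{A}_k^c\bar{\mathbf{f}}}{\bar{\mathbf{f}}^H\mathbf{B}_k^c\bar{\mathbf{f}}}$,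 $\bar R_{p,k}(\bar{\mathbf{f}})=\log_2\frac{\bar{\mathbf{f}}^H\mathbf{A}_k^p\bar{\mathbf{f}}}{\bar{\mathbf{f}}^H\mathbf{B}_k^p\bar{\mathbf{f}}}$, the smoothed minimum (LogSumExp) $S(\bar{\mathbf{f}})=-\alpha\ln\big(\frac1K\sum_{i=1}^K\exp(-\bar R_{c,i}(\bar{\mathbf{f}})/\alpha)\big)$, the weights $\pi_i(\bar{\mathbf{f}})=\exp(-\bar R_{c,i}/\alpha)/\sum_{\ell=1}^K\exp(-\bar R_{c,\ell}/\alpha)$, and $\mathbf{L}_A(\bar{\mathbf{f}})=\sum_{i=1}^K\pi_i\frac{\mathbf{A}_i^c}{\bar{\mathbf{f}}^H\mathbf{A}_i^c\bar{\mathbf{f}}}$, $\mathbf{L}_B(\bar{\mathbf{f}})=\sum_{i=1}^K\pi_i\frac{\mathbf{B}_i^c}{\bar{\mathbf{f}}^H\mathbf{B}_i^c\bar{\mathbf{f}}}$. For $\mathbf{v}=(v_1,\dots,v_{K+1})^T\in\mathbb{R}^{K+1}\setminus\{\mathbf 0\}$, let $\mathbf{E}_k$ ($k=1,\dots,K+1$) be the $(K+1)\times(K+1)$ diagonal matrix with $1$ in position $(k,k)$ and $0$ elsewhere, $w_k(\mathbf{v})=\frac{\mathbf{v}^T\mathbf{E}_k\mathbf{v}}{\mathbf{v}^T\mathbf{v}}=\frac{v_k^2}{\|\mathbf{v}\|^2}$, $C_k(\bar{\mathbf{f}},\mathbf{v})=w_k(\mathbf{v})S(\bar{\mathbf{f}})$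 for $k=1,\dots,K$ (common-rate portions of unicast messages) and $C_{\mathrm{mc}}(\bar{\mathbf{f}},\mathbf{v})=w_{K+1}(\mathbf{v})S(\bar{\mathbf{f}})$ (multicast common-rate portion). Objective: $f(\bar{\mathbf{f}},\mathbf{v})=\sum_{j=1}^K\big(R_{\mathrm{target},j}-\bar R_{p,j}(\bar{\mathbf{f}})-C_j(\bar{\mathbf{f}},\mathbf{v})\big)^2+\eta_{\mathrm{mc}}\big(R_{\mathrm{target,mc}}-C_{\mathrm{mc}}(\bar{\mathbf{f}},\mathbf{v})\big)^2$. Scalars: $\lambda_{\mathrm{num}}(\bar{\mathbf{f}},\mathbf{v})=\prod_{j=1}^K\exp\big(-(R_{\mathrm{target},j}-\bar R_{p,j}-C_j)^2\big)$, $\lambda_{\mathrm{den}}(\bar{\mathbf{f}},\mathbf{v})=\exp\big(\eta_{\mathrm{mc}}(R_{\mathrm{target,mc}}-C_{\mathrm{mc}})^2\big)$, $\lambda(\bar{\mathbf{f}},\mathbf{v})=\lambda_{\mathrm{num}}/\lambda_{\mathrm{den}}=\exp(-f(\bar{\mathbf{f}},\mathbf{v}))$. $\nabla_{\bar{\mathbf{f}}^*}$ denotes the Wirtinger gradient with respect to the complex conjugate of $\bar{\mathbf{f}}$ (its vanishing is equivalent to vanishing of the real gradient with respect to the real and imaginary parts of $\bar{\mathbf{f}}$). *)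

(* Defs.v *)
From HB Require Import structures.
From mathcomp Require Import all_boot all_order all_algebra.
From mathcomp Require Import all_classical all_reals all_analysis.
From mathcomp Require Import complex.
Set Implicit Arguments. Unset Strict Implicit. Unset Printing Implicit Defensive.
Import Order.TTheory GRing.Theory Num.Theory.
Local Open Scope ring_scope.

(* System parameters.  Users are indexed by 'I_K (user k of the paper is
   index k-1 here). *)
Record sysp (R : realType) (Nt K : nat) := Sysp {
  ach   : 'I_K -> 'cV[R[i]]_Nt;
  gam   : 'I_K -> R;
  sig2  : R;
  pow   : R;
  alph  : R;
  etamc : R;
  Rtgt  : 'I_K -> R;
  Rtmc  : R
}.

Section Defs.
Variables (R : realType) (Nt K : nat) (s : sysp R Nt K).
Local Notation C := R[i].

(* n = N_t (K+1), realised as the size of a block-diagonal matrix with K+1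
   blocks of size N_t. *)
Definition dimn := (\sum_(i < K.+1) Nt)%N.

Definition rC (x : R) : C := Complex x 0.

Definition ctr (m p : nat) (A : 'M[C]_(m, p)) : 'M[C]_(p, m) := (map_mx conjc A)^T.

(* block-diagonal matrix with K+1 blocks (block 0 = common stream,
   block k+1 = private stream of user k) *)
Definition blkdiag (B : 'I_K.+1 -> 'M[C]_Nt) : 'M[C]_dimn :=
  @mxdiag C K.+1 (fun _ => Nt) B.

Definition rk1 (k : 'I_K) : 'M[C]_Nt :=
  rC (gam s k) *: (ach s k *m ctr (ach s k)).

Definition noiseI : 'M[C]_dimn := (rC (sig2 s / pow s))%:M.

Definition Ac (k : 'I_K) : 'M[C]_dimn := blkdiag (fun _ => rk1 k) + noiseI.
Definition Bc (k : 'I_K) : 'M[C]_dimn :=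
  Ac k - blkdiag (fun b => if b == ord0 then rk1 k else 0).
Definition Ap (k : 'I_K) : 'M[C]_dimn :=
  blkdiag (fun b => if b == ord0 then 0 else rk1 k) + noiseI.
Definition Bp (k : 'I_K) : 'M[C]_dimn :=
  Ap k - blkdiag (fun b => if b == lift ord0 k then rk1 k else 0).

(* Hermitian form f^H M f (real part; it is real for Hermitian M) *)
Definition qf (M : 'M[C]_dimn) (f : 'cV[C]_dimn) : R :=
  @complex.Re R ((ctr f *m M *m f) ord0 ord0).

Definition log2 (x : R) : R := ln x / ln 2.

Definition Rcb (k : 'I_K) (f : 'cV[C]_dimn) : R := log2 (qf (Ac k) f / qf (Bc k) f).
Definition Rpb (k : 'I_K) (f : 'cV[C]_dimn) : R := log2 (qf (Ap k) f / qf (Bp k) f).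

Definition Ssm (f : 'cV[C]_dimn) : R :=
  - alph s * ln (K%:R^-1 * \sum_(i < K) expR (- Rcb i f / alph s)).

Definition piw (i : 'I_K) (f : 'cV[C]_dimn) : R :=
  expR (- Rcb i f / alph s) / \sum_(l < K) expR (- Rcb l f / alph s).

Definition LA (f : 'cV[C]_dimn) : 'M[C]_dimn :=
  \sum_(i < K) rC (piw i f / qf (Ac i) f) *: Ac i.
Definition LB (f : 'cV[C]_dimn) : 'M[C]_dimn :=
  \sum_(i < K) rC (piw i f / qf (Bc i) f) *: Bc i.

(* v in R^{K+1}; slot j (0-indexed) of v is v_{j+1} of the paper:
   slots 0..K-1 for the users, slot K (= ord_max) for the multicast message *)
Definition wv (v : 'cV[R]_K.+1) (k : 'I_K.+1) : R :=
  v k ord0 ^+ 2 / \sum_(i < K.+1) v i ord0 ^+ 2.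

Definition uslot (j : 'I_K) : 'I_K.+1 := widen_ord (leqnSn K) j.

Definition Cu (f : 'cV[C]_dimn) (v : 'cV[R]_K.+1) (j : 'I_K) : R :=
  wv v (uslot j) * Ssm f.
Definition Cmc (f : 'cV[C]_dimn) (v : 'cV[R]_K.+1) : R := wv v ord_max * Ssm f.

Definition obj (f : 'cV[C]_dimn) (v : 'cV[R]_K.+1) : R :=
  \sum_(j < K) (Rtgt s j - Rpb j f - Cu f v j) ^+ 2
  + etamc s * (Rtmc s - Cmc f v) ^+ 2.

Definition lam_num (f : 'cV[C]_dimn) (v : 'cV[R]_K.+1) : R :=
  \prod_(j < K) expR (- (Rtgt s j - Rpb j f - Cu f v j) ^+ 2).
Definition lam_den (f : 'cV[C]_dimn) (v : 'cV[R]_K.+1) : R :=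
  expR (etamc s * (Rtmc s - Cmc f v) ^+ 2).
Definition lam (f : 'cV[C]_dimn) (v : 'cV[R]_K.+1) : R := lam_num f v / lam_den f v.

Definition Amat (f : 'cV[C]_dimn) (v : 'cV[R]_K.+1) : 'M[C]_dimn :=
  rC (lam_num f v) *:
  (\sum_(j < K)
     (rC (Rtgt s j) *: (rC (qf (Ap j) f)^-1 *: Ap j + rC (wv v (uslot j)) *: LA f)
      + rC (Rpb j f / qf (Bp j) f) *: Bp j
      + rC (wv v (uslot j) * Cu f v j) *: LB f
      + rC (wv v (uslot j) * Rpb j f) *: LB f
      + rC (Cu f v j / qf (Bp j) f) *: Bp j)
   + rC (etamc s) *: (rC (Rtmc s * wv v ord_max) *: LA f
                      + rC (wv v ord_max * Cmc f v) *: LB f)).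

Definition Bmat (f : 'cV[C]_dimn) (v : 'cV[R]_K.+1) : 'M[C]_dimn :=
  rC (lam_den f v) *:
  (\sum_(j < K)
     (rC (Rtgt s j) *: (rC (qf (Bp j) f)^-1 *: Bp j + rC (wv v (uslot j)) *: LB f)
      + rC (Rpb j f / qf (Ap j) f) *: Ap j
      + rC (wv v (uslot j) * Cu f v j) *: LA f
      + rC (wv v (uslot j) * Rpb j f) *: LA f
      + rC (Cu f v j / qf (Ap j) f) *: Ap j)
   + rC (etamc s) *: (rC (Rtmc s * wv v ord_max) *: LB f
                      + rC (wv v ord_max * Cmc f v) *: LA f)).

End Defs.

(* Wirtinger gradient with respect to the conjugate of z, for a real-valued
   function g on C^m:  (dg/dz_k^* ) = 1/2 (dg/dx_k + i dg/dy_k), z_k = x_k + i y_k,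
   the real partial derivatives being taken with derive1. *)
Definition wgrad (R : realType) (m : nat) (g : 'cV[R[i]]_m -> R)
    (z : 'cV[R[i]]_m) : 'cV[R[i]]_m :=
  \col_(k < m)
    Complex (2^-1 * derive1 (fun t : R => g (z + Complex t 0 *: delta_mx k ord0)) 0)
            (2^-1 * derive1 (fun t : R => g (z + Complex 0 t *: delta_mx k ord0)) 0).

(* Main.v *)
Require Import Defs.
From HB Require Import structures.
From mathcomp Require Import all_boot all_order all_algebra.
From mathcomp Require Import all_classical all_reals all_analysis.
From mathcomp Require Import complex.
From mathcomp Require Import ring lra.
Import Order.TTheory GRing.Theory Num.Theory.
Local Open Scope ring_scope.


Section Der.
Context {R : realType}.
Implicit Types (g h : R -> R) (x a b : R).

Lemma dD {g h x a b} : is_derive x 1 g a -> is_derive x 1 h b ->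
  is_derive x 1 (fun t => g t + h t) (a + b).
Proof. move=> ga hb; exact: (@is_deriveD _ _ _ g h). Qed.

Lemma dN {g x a} : is_derive x 1 g a -> is_derive x 1 (fun t => - g t) (- a).
Proof. move=> ga; exact: (@is_deriveN _ _ _ g). Qed.

Lemma dB {g h x a b} : is_derive x 1 g a -> is_derive x 1 h b ->
  is_derive x 1 (fun t => g t - h t) (a - b).
Proof. by move=> ga hb; apply: dD => //; apply: dN. Qed.

Lemma dC x (c : R) : is_derive x 1 (fun _ => c) 0.
Proof. exact: is_derive_cst. Qed.

Lemma dId x : is_derive x 1 (fun t : R => t) 1.
Proof. exact: is_derive_id. Qed.

Lemma dM {g h x a b} : is_derive x 1 g a -> is_derive x 1 h b ->
  is_derive x 1 (fun t => g t * h t) (g x * b + h x * a).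
Proof. move=> ga hb; exact: (@is_deriveM _ _ g h). Qed.

Lemma dcomp {F : R -> R} {g x a b} : is_derive (g x) 1 F a -> is_derive x 1 g b ->
  is_derive x 1 (fun t => F (g t)) (a * b).
Proof. move=> Fa gb; exact: (@is_derive1_comp _ F g). Qed.

Lemma dln {g x a} : 0 < g x -> is_derive x 1 g a ->
  is_derive x 1 (fun t => ln (g t)) (a / g x).
Proof.
move=> gp ga; apply: is_derive_eq; first exact: (dcomp (is_derive1_ln gp) ga).
by rewrite mulrC.
Qed.

Lemma dexp {g x a} : is_derive x 1 g a ->
  is_derive x 1 (fun t => expR (g t)) (expR (g x) * a).
Proof. move=> ga; exact: (dcomp (is_derive_expR (g x)) ga). Qed.

Lemma dV {g x a} : g x != 0 -> is_derive x 1 g a ->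
  is_derive x 1 (fun t => (g t)^-1) (- a / (g x) ^+ 2).
Proof.
move=> gn ga; apply: is_derive_eq (is_deriveV gn ga) _.
change ((- (g x) ^- 2) * a = - a / (g x)^+2); ring. Qed.

Lemma dsum n (H : 'I_n -> R -> R) x (dh : 'I_n -> R) :
  (forall i, is_derive x 1 (H i) (dh i)) ->
  is_derive x 1 (fun t => \sum_(i < n) H i t) (\sum_(i < n) dh i).
Proof.
move=> hd; have := is_derive_sum hd.
suff -> : (\sum_(i < n) H i) = (fun t => \sum_(i < n) H i t) by [].
by apply: funext => t; rewrite fct_sumE.
Qed.

Lemma dsq {g x a} : is_derive x 1 g a -> is_derive x 1 (fun t => g t ^+ 2) (2 * g x * a).
Proof.
move=> ga; have -> : (fun t => g t ^+ 2) = (fun t => g t * g t).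
  by apply: funext => t; rewrite expr2.
by apply: is_derive_eq (dM ga ga) _; ring.
Qed.

End Der.


Section Cx.
Variable R : realType.
Local Notation C := R[i].
Local Notation Re := (@complex.Re R).

Lemma rCE (x : R) : rC x = (x%:C)%C. Proof. by []. Qed.
Lemma conj_rC (x : R) : conjc (rC x) = rC x.
Proof. by rewrite /rC /= oppr0. Qed.
Lemma Re0 : Re (0 : C) = 0. Proof. by []. Qed.
Lemma ReD (x y : C) : Re (x + y) = Re x + Re y. Proof. by case: x; case: y. Qed.
Lemma ReN (x : C) : Re (- x) = - Re x. Proof. by case: x. Qed.
Lemma ReB (x y : C) : Re (x - y) = Re x - Re y. Proof. by rewrite ReD ReN. Qed.
Lemma ReZ (t : R) (z : C) : Re (rC t * z) = t * Re z.
Proof. by case: z => a b /=; ring. Qed.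
Lemma Re_sum n (F : 'I_n -> C) : Re (\sum_(i < n) F i) = \sum_(i < n) Re (F i).
Proof.
exact: (big_morph _ ReD Re0).
Qed.
Lemma rC0 : rC 0 = 0 :> C. Proof. by []. Qed.
Lemma rCD (x y : R) : rC (x + y) = rC x + rC y :> C.
Proof. by rewrite /rC /=; congr Complex; ring. Qed.
Lemma rCM (x y : R) : rC (x * y) = rC x * rC y :> C.
Proof. by rewrite /rC /=; congr Complex; ring. Qed.
Lemma rC_eq0 (x : R) : (rC x == 0 :> C) = (x == 0).
Proof. by rewrite /rC eq_complex /= eqxx andbT. Qed.

Variable m : nat.
Implicit Types (A B M : 'M[C]_m) (x y d f : 'cV[C]_m).

Lemma ctrE0 p q (A : 'M[C]_(p, q)) i j : ctr A i j = conjc (A j i).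
Proof. by rewrite /ctr !mxE. Qed.
Lemma ctr0 p q : ctr (0 : 'M[C]_(p,q)) = 0.
Proof. by apply/matrixP => i j; rewrite ctrE0 !mxE conjc0. Qed.
Lemma ctrD p q (A B : 'M[C]_(p, q)) : ctr (A + B) = ctr A + ctr B.
Proof. by rewrite /ctr map_mxD linearD. Qed.
Lemma ctrN p q (A : 'M[C]_(p, q)) : ctr (- A) = - ctr A.
Proof. by rewrite /ctr map_mxN linearN. Qed.
Lemma ctrB p q (A B : 'M[C]_(p, q)) : ctr (A - B) = ctr A - ctr B.
Proof. by rewrite ctrD ctrN. Qed.
Lemma ctrZ p q (t : R) (A : 'M[C]_(p, q)) : ctr (rC t *: A) = rC t *: ctr A.
Proof. by rewrite /ctr map_mxZ (_ : _ (rC t) = rC t) ?linearZ // ; exact: conj_rC. Qed.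
Lemma ctr_mul p q r (A : 'M[C]_(p, q)) (B : 'M[C]_(q, r)) :
  ctr (A *m B) = ctr B *m ctr A.
Proof. by rewrite /ctr map_mxM trmx_mul. Qed.
Lemma ctrK p q (A : 'M[C]_(p, q)) : ctr (ctr A) = A.
Proof.
by apply/matrixP => i j; rewrite /ctr !mxE conjcK.
Qed.
Lemma ctr_sum p q n (F : 'I_n -> 'M[C]_(p, q)) :
  ctr (\sum_(i < n) F i) = \sum_(i < n) ctr (F i).
Proof.
apply: (big_morph _ (@ctrD _ _)).
by apply/matrixP => i j; rewrite ctrE0 !mxE conjc0.
Qed.
Lemma ctr_scalar (t : R) : ctr ((rC t)%:M : 'M[C]_m) = (rC t)%:M.
Proof.
apply/matrixP => i j; rewrite ctrE0 !mxE eq_sym; case: eqP => _ /=; rewrite ?mulr1n ?mulr0n /rC ?oppr0 //. Qed.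
End Cx.


Section Blk.
Variables (R : realType) (Nt K : nat).
Local Notation C := R[i].
Local Notation Re := (@complex.Re R).
Local Notation n := (dimn Nt K).

Lemma map_blkdiag (B : 'I_K.+1 -> 'M[C]_Nt) :
  map_mx conjc (blkdiag B) = blkdiag (fun b => map_mx conjc (B b)).
Proof.
rewrite /blkdiag /mxdiag /mxblock; apply/matrixP => i j; rewrite !mxE.
case: eqP => _; last by rewrite !mxE conjc0.
have E p q (A : 'M[C]_(p, q)) a b : conjc (A a b) = map_mx conjc A a b by rewrite mxE.
rewrite E map_conform_mx.
congr (conform_mx _ _ _ _); by apply/matrixP=> a b; rewrite !mxE conjc0.
Qed.

Lemma ctr_blkdiag (B : 'I_K.+1 -> 'M[C]_Nt) :
  ctr (blkdiag B) = blkdiag (fun b => ctr (B b)).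
Proof. by rewrite /ctr map_blkdiag /blkdiag tr_mxdiag. Qed.

Lemma ctr_mxcol (X : 'I_K.+1 -> 'cV[C]_Nt) :
  ctr (\mxcol_i X i : 'cV[C]_n) = \mxrow_i ctr (X i).
Proof. by apply/matrixP => i j; rewrite !mxE. Qed.

Lemma blk_form (B : 'I_K.+1 -> 'M[C]_Nt) (x y : 'cV[C]_n) :
  ctr x *m blkdiag B *m y =
  \sum_(b < K.+1) (ctr (submxcol x b) *m B b *m submxcol y b).
Proof.
rewrite -{1}(submxcolK x) -{1}(submxcolK y) ctr_mxcol -mulmxA /blkdiag.
rewrite mul_mxdiag_mxcol mul_mxrow_mxcol.
by apply: eq_bigr => b _; rewrite mulmxA.
Qed.
End Blk.


Section Psd.
Variables (R : realType).
Local Notation C := R[i].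
Local Notation Re := (@complex.Re R).
Local Notation Im := (@complex.Im R).

Definition psd {p} (X : 'M[C]_p) := forall x : 'cV[C]_p, 0 <= Re ((ctr x *m X *m x) 0 0).
Definition herm {p} (X : 'M[C]_p) := ctr X = X.

Lemma Re_conjM (z : C) : Re (conjc z * z) = Re z ^+ 2 + Im z ^+ 2.
Proof. by case: z => a b /=; ring. Qed.

Lemma Re_conjM_ge0 (z : C) : 0 <= Re (conjc z * z).
Proof. by rewrite Re_conjM addr_ge0 // sqr_ge0. Qed.

Lemma Re_conjM_gt0 (z : C) : z != 0 -> 0 < Re (conjc z * z).
Proof.
case: z => a b nz; rewrite Re_conjM /=.
case: (eqVneq a 0) => [a0|ha].
  have hb : b != 0 by apply: contra nz => /eqP ->; rewrite a0.
  by rewrite ltr_wpDl ?sqr_ge0 // exprn_even_gt0 // hb orbT.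
by rewrite ltr_wpDr ?sqr_ge0 // exprn_even_gt0 // ha orbT.
Qed.

Lemma mx11E p (A : 'M[C]_(1, p)) (B : 'M[C]_(p, 1)) :
  (A *m B) 0 0 = \sum_(k < p) A 0 k * B k 0.
Proof. by rewrite mxE. Qed.

Lemma psd0 p : psd (0%R : 'M[C]_p).
Proof. by move=> x; rewrite mulmx0 mul0mx mxE. Qed.

Lemma psd_rk1 p (g : R) (a : 'cV[C]_p) : 0 <= g -> psd (rC g *: (a *m ctr a)).
Proof.
move=> g0 x; rewrite -scalemxAr -scalemxAl mxE !mulmxA -[_ *m ctr a *m x]mulmxA.
have -> : ctr x *m a = ctr (ctr a *m x) by rewrite ctr_mul ctrK.
rewrite [X in Re (_ * X)]mx11E big_ord1 ctrE0 ReZ mulr_ge0 //.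
exact: Re_conjM_ge0.
Qed.

Lemma psd_blk Nt K (B : 'I_K.+1 -> 'M[C]_Nt) : (forall b, psd (B b)) -> psd (blkdiag B).
Proof.
move=> hB x; rewrite blk_form summxE Re_sum sumr_ge0 // => b _; exact: hB.
Qed.

Lemma noise_pos p (f : 'cV[C]_p) : f != 0 -> 0 < Re ((ctr f *m f) 0 0).
Proof.
move=> nf.
have [k hk] : exists k, f k 0 != 0.
  apply/existsP; apply: contraR nf; rewrite negb_exists => /forallP H.
  by apply/eqP/matrixP => i j; rewrite ord1 mxE; apply/eqP; move: (H i); rewrite negbK.
rewrite mx11E Re_sum (bigD1 k) //= ltr_wpDr ?sumr_ge0 // => [i _|].
  by rewrite ctrE0; exact: Re_conjM_ge0.
by rewrite ctrE0; exact: Re_conjM_gt0.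
Qed.

Lemma qf_noise_pos p (X : 'M[C]_p) (c : R) (f : 'cV[C]_p) :
  psd X -> 0 < c -> f != 0 -> 0 < Re ((ctr f *m (X + (rC c)%:M) *m f) 0 0).
Proof.
move=> hX c0 nf; rewrite mulmxDr mulmxDl mxE ReD ltr_wpDl //.
by rewrite mul_mx_scalar -scalemxAl mxE ReZ mulr_gt0 // noise_pos.
Qed.

Lemma herm0 p : herm (0%R : 'M[C]_p). Proof. exact: ctr0. Qed.
Lemma hermD p (X Y : 'M[C]_p) : herm X -> herm Y -> herm (X + Y).
Proof. by rewrite /herm ctrD => -> ->. Qed.
Lemma hermB p (X Y : 'M[C]_p) : herm X -> herm Y -> herm (X - Y).
Proof. by rewrite /herm ctrB => -> ->. Qed.
Lemma hermZ p (t : R) (X : 'M[C]_p) : herm X -> herm (rC t *: X).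
Proof. by rewrite /herm ctrZ => ->. Qed.
Lemma herm_sum p m (F : 'I_m -> 'M[C]_p) : (forall i, herm (F i)) -> herm (\sum_(i < m) F i).
Proof. by move=> H; rewrite /herm ctr_sum; apply: eq_bigr => i _; apply: H. Qed.
Lemma herm_rk1 p (g : R) (a : 'cV[C]_p) : herm (rC g *: (a *m ctr a)).
Proof. by apply: hermZ; rewrite /herm ctr_mul ctrK. Qed.
Lemma herm_blk Nt K (B : 'I_K.+1 -> 'M[C]_Nt) : (forall b, herm (B b)) -> herm (blkdiag B).
Proof. by move=> H; rewrite /herm ctr_blkdiag; apply: eq_mxdiag => b; apply: H. Qed.
Lemma herm_scal p (t : R) : herm ((rC t)%:M : 'M[C]_p).
Proof. exact: ctr_scalar. Qed.
End Psd.
Arguments psd {R p}.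
Arguments herm {R p}.


Section Spec.
Variables (R : realType) (Nt K : nat) (s : sysp R Nt K).
Hypotheses (hgam : forall k, 0 < gam s k) (hsig : 0 < sig2 s) (hP : 0 < pow s).
Local Notation C := R[i].

Let hc : 0 < sig2 s / pow s. Proof. by rewrite divr_gt0. Qed.

Lemma psd_rk1' k : psd (rk1 s k).
Proof. by apply: psd_rk1; apply: ltW. Qed.
Lemma herm_rk1' k : herm (rk1 s k).
Proof. exact: herm_rk1. Qed.

Lemma Bc_eq k : Bc s k = blkdiag (fun b => rk1 s k - (if b == ord0 then rk1 s k else 0)) + noiseI s.
Proof. by rewrite /Bc /Ac addrAC /blkdiag mxdiagB. Qed.
Lemma Bp_eq k : Bp s k = blkdiag (fun b => (if b == ord0 then 0 else rk1 s k)
   - (if b == lift ord0 k then rk1 s k else 0)) + noiseI s.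
Proof. by rewrite /Bp /Ap addrAC /blkdiag mxdiagB. Qed.

Lemma blkBc_psd k (b : 'I_K.+1) : psd (rk1 s k - (if b == ord0 then rk1 s k else 0)).
Proof. by case: ifP => _; rewrite ?subrr ?subr0; [apply: psd0|apply: psd_rk1']. Qed.
Lemma blkBp_psd k (b : 'I_K.+1) : psd ((if b == ord0 then 0 else rk1 s k)
   - (if b == lift ord0 k then rk1 s k else 0)).
Proof.
case: (eqVneq b (lift ord0 k)) => [->|_].
  by rewrite lift_eqF subrr; apply: psd0.
by rewrite subr0; case: ifP => _; [apply: psd0|apply: psd_rk1'].
Qed.
Lemma blkBc_herm k (b : 'I_K.+1) : herm (rk1 s k - (if b == ord0 then rk1 s k else 0)).
Proof. by case: ifP => _; rewrite ?subrr ?subr0; [apply: herm0|apply: herm_rk1']. Qed.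
Lemma blkBp_herm k (b : 'I_K.+1) : herm ((if b == ord0 then 0 else rk1 s k)
   - (if b == lift ord0 k then rk1 s k else 0)).
Proof.
case: (eqVneq b (lift ord0 k)) => [->|_].
  by rewrite lift_eqF subrr; apply: herm0.
by rewrite subr0; case: ifP => _; [apply: herm0|apply: herm_rk1'].
Qed.

Variable f : 'cV[C]_(dimn Nt K).
Hypothesis hf : f != 0.

Lemma Ac_pos k : 0 < qf (Ac s k) f.
Proof. apply: qf_noise_pos => //; apply: psd_blk => b; exact: psd_rk1'. Qed.
Lemma Bc_pos k : 0 < qf (Bc s k) f.
Proof. rewrite /qf Bc_eq; apply: qf_noise_pos => //; apply: psd_blk => b; exact: blkBc_psd. Qed.
Lemma Ap_pos k : 0 < qf (Ap s k) f.
Proof.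
apply: qf_noise_pos => //; apply: psd_blk => b.
by case: ifP => _; [apply: psd0|apply: psd_rk1'].
Qed.
Lemma Bp_pos k : 0 < qf (Bp s k) f.
Proof. rewrite /qf Bp_eq; apply: qf_noise_pos => //; apply: psd_blk => b; exact: blkBp_psd. Qed.

End Spec.

Section Herm.
Variables (R : realType) (Nt K : nat) (s : sysp R Nt K).

Lemma Ac_herm k : herm (Ac s k).
Proof. apply: hermD; last exact: herm_scal. apply: herm_blk => b; exact: herm_rk1'. Qed.
Lemma Bc_herm k : herm (Bc s k).
Proof. rewrite Bc_eq; apply: hermD; last exact: herm_scal. apply: herm_blk => b; exact: blkBc_herm. Qed.
Lemma Ap_herm k : herm (Ap s k).
Proof.
apply: hermD; last exact: herm_scal. apply: herm_blk => b.
by case: ifP => _; [apply: herm0|apply: herm_rk1'].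
Qed.
Lemma Bp_herm k : herm (Bp s k).
Proof. rewrite Bp_eq; apply: hermD; last exact: herm_scal. apply: herm_blk => b; exact: blkBp_herm. Qed.
Lemma LA_herm f : herm (LA s f).
Proof. apply: herm_sum => i; apply: hermZ; exact: Ac_herm. Qed.
Lemma LB_herm f : herm (LB s f).
Proof. apply: herm_sum => i; apply: hermZ; exact: Bc_herm. Qed.
End Herm.


Section Ell.
Context {R : realType} {m : nat}.
Local Notation C := R[i].
Local Notation Re := (@complex.Re R).
Variables (f d : 'cV[C]_m).

Definition ell (M : 'M[C]_m) : R :=
  Re ((ctr d *m M *m f) 0 0) + Re ((ctr f *m M *m d) 0 0).

Lemma ellD M N : ell (M + N) = ell M + ell N.
Proof. rewrite /ell !(mulmxDr, mulmxDl) !mxE !ReD; ring. Qed.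
Lemma ellZ (c : R) M : ell (rC c *: M) = c * ell M.
Proof. rewrite /ell -!scalemxAr -!scalemxAl !mxE !ReZ; ring. Qed.
Lemma ell0 : ell 0 = 0.
Proof. by rewrite /ell !(mulmx0, mul0mx) !mxE addr0. Qed.
Lemma ellN M : ell (- M) = - ell M.
Proof. by rewrite -[LHS]addr0 -(subrr (ell M)) addrA -ellD addNr ell0 add0r. Qed.
Lemma ellB M N : ell (M - N) = ell M - ell N.
Proof. by rewrite ellD ellN. Qed.
Lemma ell_sum n (F : 'I_n -> 'M[C]_m) : ell (\sum_(i < n) F i) = \sum_(i < n) ell (F i).
Proof. exact: (big_morph _ ellD ell0). Qed.

Definition Fs (t : R) := f + rC t *: d.
Lemma Fs0 : Fs 0 = f. Proof. by rewrite /Fs rC0 scale0r addr0. Qed.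

Lemma qf_shift (M : 'M[C]_m) t :
  Re ((ctr (Fs t) *m M *m Fs t) 0 0) =
  Re ((ctr f *m M *m f) 0 0) + t * ell M + t ^+ 2 * Re ((ctr d *m M *m d) 0 0).
Proof.
rewrite /Fs ctrD ctrZ !(mulmxDr, mulmxDl) -!scalemxAr -!scalemxAl !mxE !ReD !ReZ /ell !mxE; ring. Qed.


Lemma dqf (M : 'M[C]_m) :
  is_derive (0 : R) 1 (fun t => Re ((ctr (Fs t) *m M *m Fs t) 0 0)) (ell M).
Proof.
have -> : (fun t => Re ((ctr (Fs t) *m M *m Fs t) 0 0)) =
  (fun t => Re ((ctr f *m M *m f) 0 0) + t * ell M + t ^+ 2 * Re ((ctr d *m M *m d) 0 0)).
  by apply: funext => t; apply: qf_shift.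
have H := dD (dD (dC 0 (Re ((ctr f *m M *m f) 0 0))) (dM (dId 0) (dC 0 (ell M))))
  (dM (dsq (dId 0)) (dC 0 (Re ((ctr d *m M *m d) 0 0)))).
apply: is_derive_eq H _; rewrite /=; ring.
Qed.
End Ell.


Section DLog.
Context {R : realType}.

Lemma ln2_gt0 : 0 < ln (2 : R).
Proof. by rewrite ln_gt0 // ltr1n. Qed.

Lemma dlog2r {g h : R -> R} {a b G H : R} : g 0 = G -> h 0 = H -> 0 < G -> 0 < H ->
  is_derive (0:R) 1 g a -> is_derive (0:R) 1 h b ->
  is_derive (0:R) 1 (fun t => log2 (g t / h t)) ((a / G - b / H) / ln 2).
Proof.
move=> <- <- gp hp ga hb.
have hn : h 0 != 0 by rewrite gt_eqF.
have rp : 0 < g 0 / h 0 by rewrite divr_gt0.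
have D := dM (dln (g := fun t => g t / h t) (x := 0) rp (dM ga (dV hn hb))) (dC 0 (ln 2)^-1).
apply: is_derive_eq D _.
have := ln2_gt0; rewrite /= => l2.
field; rewrite ?gt_eqF //.
Qed.
End DLog.

Section Til.
Context {R : realType} {Nt K : nat} (s : sysp R Nt K).
Local Notation C := R[i].
Definition Atil (f : 'cV[C]_(dimn Nt K)) (v : 'cV[R]_K.+1) : 'M[C]_(dimn Nt K) :=
  (\sum_(j < K)
     (rC (Rtgt s j) *: (rC (qf (Ap s j) f)^-1 *: Ap s j + rC (wv v (uslot j)) *: LA s f)
      + rC (Rpb s j f / qf (Bp s j) f) *: Bp s j
      + rC (wv v (uslot j) * Cu s f v j) *: LB s f
      + rC (wv v (uslot j) * Rpb s j f) *: LB s f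
      + rC (Cu s f v j / qf (Bp s j) f) *: Bp s j)
   + rC (etamc s) *: (rC (Rtmc s * wv v ord_max) *: LA s f
                      + rC (wv v ord_max * Cmc s f v) *: LB s f)).
Definition Btil (f : 'cV[C]_(dimn Nt K)) (v : 'cV[R]_K.+1) : 'M[C]_(dimn Nt K) :=
  (\sum_(j < K)
     (rC (Rtgt s j) *: (rC (qf (Bp s j) f)^-1 *: Bp s j + rC (wv v (uslot j)) *: LB s f)
      + rC (Rpb s j f / qf (Ap s j) f) *: Ap s j
      + rC (wv v (uslot j) * Cu s f v j) *: LA s f
      + rC (wv v (uslot j) * Rpb s j f) *: LA s f
      + rC (Cu s f v j / qf (Ap s j) f) *: Ap s j)
   + rC (etamc s) *: (rC (Rtmc s * wv v ord_max) *: LB s f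
                      + rC (wv v ord_max * Cmc s f v) *: LA s f)).
Lemma AmatE f v : Amat s f v = rC (lam_num s f v) *: Atil f v. Proof. by []. Qed.
Lemma BmatE f v : Bmat s f v = rC (lam_den s f v) *: Btil f v. Proof. by []. Qed.
End Til.

Section Main.
Variables (R : realType) (Nt K : nat) (s : sysp R Nt K).
Hypotheses (hK : (0 < K)%N) (hgam : forall k, 0 < gam s k) (hsig : 0 < sig2 s)
  (hP : 0 < pow s) (halpha : 0 < alph s).
Local Notation C := R[i].
Local Notation n := (dimn Nt K).
Variables (f d : 'cV[C]_n) (v : 'cV[R]_K.+1).
Hypothesis hf : f != 0.
Local Notation F := (Fs f d).
Local Notation EL := (ell f d).

Definition dRp j := (EL (Ap s j) / qf (Ap s j) f - EL (Bp s j) / qf (Bp s j) f) / ln 2.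
Definition dRc j := (EL (Ac s j) / qf (Ac s j) f - EL (Bc s j) / qf (Bc s j) f) / ln 2.

Lemma dRpb j : is_derive (0:R) 1 (fun t => Rpb s j (F t)) (dRp j).
Proof.
apply: (dlog2r (g := fun t => qf (Ap s j) (F t)) (h := fun t => qf (Bp s j) (F t)));
  rewrite ?Fs0 //; [exact: Ap_pos|exact: Bp_pos|exact: dqf|exact: dqf].
Qed.

Lemma dRcb j : is_derive (0:R) 1 (fun t => Rcb s j (F t)) (dRc j).
Proof.
apply: (dlog2r (g := fun t => qf (Ac s j) (F t)) (h := fun t => qf (Bc s j) (F t)));
  rewrite ?Fs0 //; [exact: Ac_pos|exact: Bc_pos|exact: dqf|exact: dqf].
Qed.

Lemma sum_exp_gt0 (g : 'I_K -> R) : 0 < \sum_(i < K) expR (g i).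
Proof.
rewrite (bigD1 (Ordinal hK)) //= ltr_wpDr ?expR_gt0 // sumr_ge0 // => i _; exact: ltW (expR_gt0 _).
Qed.

Definition dS := \sum_(i < K) piw s i f * dRc i.

Lemma dSsm : is_derive (0:R) 1 (fun t => Ssm s (F t)) dS.
Proof.
have De i := dexp (dM (dN (dRcb i)) (dC 0 (alph s)^-1)).
have DS := dsum _ _ _ _ De.
have DK := dM (dC 0 (K%:R^-1)) DS.
have pos : 0 < K%:R^-1 * \sum_(i < K) expR (- Rcb s i (F 0) * (alph s)^-1).
  by rewrite mulr_gt0 ?invr_gt0 ?ltr0n // sum_exp_gt0.
have Dl := dln (g := fun t => K%:R^-1 * \sum_(i < K) expR (- Rcb s i (F t) * (alph s)^-1)) pos DK.
have Df := dM (dC 0 (- alph s)) Dl.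
apply: is_derive_eq Df _; rewrite /= Fs0.
set e := fun i => expR (- Rcb s i f / alph s).
have Se : 0 < \sum_(i < K) e i by apply: sum_exp_gt0.
rewrite (eq_bigr (fun i => - (alph s)^-1 * (e i * dRc i))); last first.
  by move=> i _; rewrite /e; ring.
rewrite /dS /piw -/e.
rewrite [RHS](eq_bigr (fun i => (\sum_(l < K) e l)^-1 * (e i * dRc i))); last first.
  by move=> i _; rewrite /e; ring.
rewrite -!mulr_sumr.
have K0 : (K%:R : R) != 0 by rewrite pnatr_eq0 -lt0n.
field; rewrite K0 !gt_eqF //. Qed.

Lemma dS_eq : dS = (EL (LA s f) - EL (LB s f)) / ln 2.
Proof.
rewrite /dS /dRc /LA /LB !ell_sum -sumrB mulr_suml; apply: eq_bigr => i _.
rewrite !ellZ; ring.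
Qed.

End Main.


Section Gen.
Context {R : realType} {m : nat} (f d : 'cV[R[i]]_m) (K : nat).
Local Notation C := R[i].

Lemma ell_til (XA XB : 'I_K -> 'M[C]_m) (LA' LB' : 'M[C]_m)
  (rt rp cu qa qb w : 'I_K -> R) (eta rtmc wmc cmc : R) :
  ell f d (\sum_(j < K)
     (rC (rt j) *: (rC (qa j)^-1 *: XA j + rC (w j) *: LA')
      + rC (rp j / qb j) *: XB j
      + rC (w j * cu j) *: LB'
      + rC (w j * rp j) *: LB'
      + rC (cu j / qb j) *: XB j)
   + rC eta *: (rC (rtmc * wmc) *: LA' + rC (wmc * cmc) *: LB'))
  = \sum_(j < K) (rt j * ((qa j)^-1 * ell f d (XA j) + w j * ell f d LA')
      + rp j / qb j * ell f d (XB j) + w j * cu j * ell f d LB'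
      + w j * rp j * ell f d LB' + cu j / qb j * ell f d (XB j))
    + eta * (rtmc * wmc * ell f d LA' + wmc * cmc * ell f d LB').
Proof.
rewrite ellD ell_sum ellZ ellD !ellZ; congr (_ + _).
by apply: eq_bigr => j _; rewrite !(ellD, ellZ).
Qed.
End Gen.

Section Alg.
Context {R : realType} (K : nat).
Lemma alg_id (rt rp w ela elb qa qb : 'I_K -> R) (S eta rtmc wmc ELA ELB l2 : R) :
  \sum_(i < K) 2 * (rt i - rp i - w i * S) *
     (0 - (ela i / qa i - elb i / qb i) / l2 - (w i * ((ELA - ELB) / l2) + S * 0))
  + (eta * (2 * (rtmc - wmc * S) * (0 - (wmc * ((ELA - ELB) / l2) + S * 0)))
     + (rtmc - wmc * S) ^+ 2 * 0)
  = - (2 / l2) *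
   ((\sum_(j < K) (rt j * ((qa j)^-1 * ela j + w j * ELA)
      + rp j / qb j * elb j + w j * (w j * S) * ELB
      + w j * rp j * ELB + (w j * S) / qb j * elb j)
    + eta * (rtmc * wmc * ELA + wmc * (wmc * S) * ELB))
  - (\sum_(j < K) (rt j * ((qb j)^-1 * elb j + w j * ELB)
      + rp j / qa j * ela j + w j * (w j * S) * ELA
      + w j * rp j * ELA + (w j * S) / qa j * ela j)
    + eta * (rtmc * wmc * ELB + wmc * (wmc * S) * ELA))).
Proof.
rewrite [in RHS]opprD [in RHS]addrACA [in RHS]mulrDr -sumrB [in RHS]mulr_sumr; congr (_ + _); last by ring.
by apply: eq_bigr => j _; ring.
Qed.
End Alg.

Section Main2.
Variables (R : realType) (Nt K : nat) (s : sysp R Nt K).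
Hypotheses (hK : (0 < K)%N) (hgam : forall k, 0 < gam s k) (hsig : 0 < sig2 s)
  (hP : 0 < pow s) (halpha : 0 < alph s).
Local Notation C := R[i].
Local Notation n := (dimn Nt K).
Variables (f d : 'cV[C]_n) (v : 'cV[R]_K.+1).
Hypothesis hf : f != 0.
Local Notation F := (Fs f d).
Local Notation EL := (ell f d).

Lemma ellAtil : EL (Atil s f v) =
  \sum_(j < K) (Rtgt s j * ((qf (Ap s j) f)^-1 * EL (Ap s j) + wv v (uslot j) * EL (LA s f))
      + Rpb s j f / qf (Bp s j) f * EL (Bp s j) + wv v (uslot j) * Cu s f v j * EL (LB s f)
      + wv v (uslot j) * Rpb s j f * EL (LB s f) + Cu s f v j / qf (Bp s j) f * EL (Bp s j))
    + etamc s * (Rtmc s * wv v ord_max * EL (LA s f) + wv v ord_max * Cmc s f v * EL (LB s f)).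
Proof.
exact: (ell_til f d _ (Ap s) (Bp s) (LA s f) (LB s f) (Rtgt s) (fun j => Rpb s j f)
  (fun j => Cu s f v j) (fun j => qf (Ap s j) f) (fun j => qf (Bp s j) f)
  (fun j => wv v (uslot j))).
Qed.

Lemma ellBtil : EL (Btil s f v) =
  \sum_(j < K) (Rtgt s j * ((qf (Bp s j) f)^-1 * EL (Bp s j) + wv v (uslot j) * EL (LB s f))
      + Rpb s j f / qf (Ap s j) f * EL (Ap s j) + wv v (uslot j) * Cu s f v j * EL (LA s f)
      + wv v (uslot j) * Rpb s j f * EL (LA s f) + Cu s f v j / qf (Ap s j) f * EL (Ap s j))
    + etamc s * (Rtmc s * wv v ord_max * EL (LB s f) + wv v ord_max * Cmc s f v * EL (LA s f)).
Proof.
exact: (ell_til f d _ (Bp s) (Ap s) (LB s f) (LA s f) (Rtgt s) (fun j => Rpb s j f)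
  (fun j => Cu s f v j) (fun j => qf (Bp s j) f) (fun j => qf (Ap s j) f)
  (fun j => wv v (uslot j))).
Qed.

Lemma ellAB : EL (Atil s f v - Btil s f v) =
  (\sum_(j < K) (Rtgt s j * ((qf (Ap s j) f)^-1 * EL (Ap s j) + wv v (uslot j) * EL (LA s f))
      + Rpb s j f / qf (Bp s j) f * EL (Bp s j) + wv v (uslot j) * Cu s f v j * EL (LB s f)
      + wv v (uslot j) * Rpb s j f * EL (LB s f) + Cu s f v j / qf (Bp s j) f * EL (Bp s j))
    + etamc s * (Rtmc s * wv v ord_max * EL (LA s f) + wv v ord_max * Cmc s f v * EL (LB s f)))
  - (\sum_(j < K) (Rtgt s j * ((qf (Bp s j) f)^-1 * EL (Bp s j) + wv v (uslot j) * EL (LB s f))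
      + Rpb s j f / qf (Ap s j) f * EL (Ap s j) + wv v (uslot j) * Cu s f v j * EL (LA s f)
      + wv v (uslot j) * Rpb s j f * EL (LA s f) + Cu s f v j / qf (Ap s j) f * EL (Ap s j))
    + etamc s * (Rtmc s * wv v ord_max * EL (LB s f) + wv v ord_max * Cmc s f v * EL (LA s f))).
Proof. rewrite ellB; congr (_ - _); [exact: ellAtil|exact: ellBtil]. Qed.

Lemma dobj : is_derive (0:R) 1 (fun t => obj s (F t) v)
  (- (2 / ln 2) * EL (Atil s f v - Btil s f v)).
Proof.
have dRpb' := @dRpb _ _ _ s hgam hsig hP f d hf.
have dSsm' := @dSsm _ _ _ s hK hgam hsig hP halpha f d hf.
have Dj j := dsq (dB (dB (dC 0 (Rtgt s j)) (dRpb' j)) (dM (dC 0 (wv v (uslot j))) dSsm')).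
have DSum := dsum _ _ _ _ Dj.
have Dmc := dM (dC 0 (etamc s)) (dsq (dB (dC 0 (Rtmc s)) (dM (dC 0 (wv v ord_max)) dSsm'))).
have D := dD DSum Dmc.
apply: is_derive_eq D _; rewrite /= Fs0.
rewrite ellAB (@dS_eq _ _ _ s f d) /dRp.
exact: (alg_id _ (Rtgt s) (fun j => Rpb s j f) (fun j => wv v (uslot j))
  (fun j => EL (Ap s j)) (fun j => EL (Bp s j)) (fun j => qf (Ap s j) f)
  (fun j => qf (Bp s j) f) (Ssm s f) (etamc s) (Rtmc s) (wv v ord_max)
  (EL (LA s f)) (EL (LB s f)) (ln 2)).
Qed.
End Main2.


Section Delta.
Context {R : realType} {m : nat}.
Local Notation C := R[i].
Local Notation Re := (@complex.Re R).
Local Notation Im := (@complex.Im R).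

Lemma ctrZc p q (c : C) (A : 'M[C]_(p, q)) : ctr (c *: A) = conjc c *: ctr A.
Proof. by rewrite /ctr map_mxZ linearZ. Qed.

Lemma ctr_delta (k : 'I_m) : ctr (delta_mx k (0 : 'I_1)) = delta_mx 0 k :> 'M[C]_(1, m).
Proof.
apply/matrixP => i j; rewrite ctrE0 !mxE.
by case: (j == k); case: (i == 0); rewrite /= ?oppr0.
Qed.

Lemma rowEnt p q (X : 'M[C]_(p, q)) k (j : 'I_q) : (row k X) 0 j = X k j.
Proof. by rewrite mxE. Qed.
Lemma colEnt p q (X : 'M[C]_(p, q)) k (i : 'I_p) : (col k X) i 0 = X i k.
Proof. by rewrite mxE. Qed.
Lemma scaleEnt p q (c : C) (X : 'M[C]_(p, q)) i j : (c *: X) i j = c * X i j.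
Proof. by rewrite mxE. Qed.
Lemma delta_ord0 (k : 'I_m) : delta_mx k ord0 = delta_mx k 0 :> 'cV[C]_m.
Proof. by congr delta_mx; apply: val_inj. Qed.
Lemma ImZ (t : R) (z : C) : Im (rC t * z) = t * Im z.
Proof. by case: z => a b /=; ring. Qed.
Lemma Re_conj (z : C) : Re (conjc z) = Re z. Proof. by case: z. Qed.

Lemma ell_delta (f : 'cV[C]_m) (H : 'M[C]_m) k : herm H ->
  ell f (delta_mx k ord0) H = 2 * Re ((H *m f) k 0).
Proof.
move=> hH; rewrite delta_ord0 /ell ctr_delta -mulmxA -rowE rowEnt -colE colEnt.
have -> : ctr f *m H = ctr (H *m f) by rewrite ctr_mul hH.
rewrite ctrE0 Re_conj; ring.
Qed.

Lemma ell_idelta (f : 'cV[C]_m) (H : 'M[C]_m) k : herm H ->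
  ell f ('i%C *: delta_mx k ord0) H = 2 * Im ((H *m f) k 0).
Proof.
move=> hH; rewrite delta_ord0 /ell ctrZc ctr_delta -!scalemxAl -scalemxAr !scaleEnt.
rewrite -mulmxA -rowE rowEnt -colE colEnt.
have -> : ctr f *m H = ctr (H *m f) by rewrite ctr_mul hH.
rewrite ctrE0; case: ((H *m f) k 0) => a b /=; ring.
Qed.
End Delta.

Section Fin.
Variables (R : realType) (Nt K : nat) (s : sysp R Nt K).
Local Notation C := R[i].
Local Notation n := (dimn Nt K).

Lemma Atil_herm f v : herm (Atil s f v).
Proof.
rewrite /Atil; apply: hermD.
  apply: herm_sum => j.
  apply: hermD; last by apply: hermZ; exact: Bp_herm.
  apply: hermD; last by apply: hermZ; exact: LB_herm.
  apply: hermD; last by apply: hermZ; exact: LB_herm.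
  apply: hermD; last by apply: hermZ; exact: Bp_herm.
  apply: hermZ; apply: hermD; apply: hermZ; [exact: Ap_herm|exact: LA_herm].
by apply: hermZ; apply: hermD; apply: hermZ; [exact: LA_herm|exact: LB_herm].
Qed.
Lemma Btil_herm f v : herm (Btil s f v).
Proof.
rewrite /Btil; apply: hermD.
  apply: herm_sum => j.
  apply: hermD; last by apply: hermZ; exact: Ap_herm.
  apply: hermD; last by apply: hermZ; exact: LA_herm.
  apply: hermD; last by apply: hermZ; exact: LA_herm.
  apply: hermD; last by apply: hermZ; exact: Ap_herm.
  apply: hermZ; apply: hermD; apply: hermZ; [exact: Bp_herm|exact: LB_herm].
by apply: hermZ; apply: hermD; apply: hermZ; [exact: LB_herm|exact: LA_herm].
Qed.
End Fin.

Section Wg.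
Variables (R : realType) (Nt K : nat) (s : sysp R Nt K).
Hypotheses (hK : (0 < K)%N) (hgam : forall k, 0 < gam s k) (hsig : 0 < sig2 s)
  (hP : 0 < pow s) (halpha : 0 < alph s).
Local Notation C := R[i].
Local Notation n := (dimn Nt K).

Lemma wgrad_eq (f : 'cV[C]_n) (v : 'cV[R]_K.+1) : f != 0 ->
  wgrad (fun g => obj s g v) f = rC (- (2 / ln 2)) *: ((Atil s f v - Btil s f v) *m f).
Proof.
move=> hf; apply/matrixP => k j; rewrite (ord1 j) scaleEnt [LHS]mxE.
have hH : herm (Atil s f v - Btil s f v) by apply: hermB; [apply: Atil_herm|apply: Btil_herm].
have D1 := @dobj _ _ _ s hK hgam hsig hP halpha f (delta_mx k ord0) v hf.
have D2 := @dobj _ _ _ s hK hgam hsig hP halpha f ('i%C *: delta_mx k ord0) v hf.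
have E1 : derive1 (fun t => obj s (f + Complex t 0 *: delta_mx k ord0) v) 0 =
   - (2 / ln 2) * ell f (delta_mx k ord0) (Atil s f v - Btil s f v).
  have -> : (fun t => obj s (f + Complex t 0 *: delta_mx k ord0) v) =
            (fun t => obj s (Fs f (delta_mx k ord0) t) v) by [].
  rewrite derive1E; case: D1 => _ E; exact: E.
have E2 : derive1 (fun t => obj s (f + Complex 0 t *: delta_mx k ord0) v) 0 =
   - (2 / ln 2) * ell f ('i%C *: delta_mx k ord0) (Atil s f v - Btil s f v).
  have -> : (fun t => obj s (f + Complex 0 t *: delta_mx k ord0) v) =
            (fun t => obj s (Fs f ('i%C *: delta_mx k ord0) t) v).
    apply: funext => t; rewrite /Fs scalerA.
    have e : rC t * 'i%C = Complex 0 t.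
      by apply/eqP; rewrite eq_complex ReiNIm ImiRe /= oppr0 !eqxx.
    by rewrite e.
  rewrite derive1E; case: D2 => _ E. exact: E.
apply/eqP; rewrite eq_complex /= ReZ ImZ; apply/andP; split; apply/eqP.
  by rewrite E1 ell_delta //; field; rewrite gt_eqF // ln2_gt0.
by rewrite E2 ell_idelta //; field; rewrite gt_eqF // ln2_gt0.
Qed.
End Wg.


Lemma final_alg (R : realType) p (A B : 'M[R[i]]_p) (f : 'cV[R[i]]_p) (c ln ld : R) :
  c != 0 -> 0 < ln -> 0 < ld -> (rC ld *: B) \in unitmx ->
  (rC c *: ((A - B) *m f) = 0 <->
   invmx (rC ld *: B) *m (rC ln *: A) *m f = rC (ln / ld) *: f).
Proof.
move=> c0 hn hd hB.
have rc0 : rC c != 0 :> R[i] by rewrite rC_eq0.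
have rn0 : rC ln != 0 :> R[i] by rewrite rC_eq0 gt_eqF.
have key : rC (ln / ld) *: ((rC ld *: B) *m f) = rC ln *: (B *m f).
  by rewrite -scalemxAl scalerA -rCM divfK // gt_eqF.
split.
  move/eqP; rewrite scaler_eq0 (negbTE rc0) /= mulmxBl subr_eq0 => /eqP hAB.
  rewrite -mulmxA -scalemxAl hAB -key -scalemxAr mulmxA mulVmx // mul1mx //.
move=> h.
have e1 : (rC ln *: A) *m f = rC (ln / ld) *: ((rC ld *: B) *m f).
  rewrite -[LHS]mul1mx -(mulmxV hB) -!mulmxA [invmx _ *m (_ *m f)]mulmxA h.
  by rewrite -scalemxAr.
move: e1; rewrite key -scalemxAl => /(scalerI rn0) hAB.
by rewrite mulmxBl hAB subrr scaler0.
Qed.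

Theorem lemma1 (R : realType) (Nt K : nat) (s : sysp R Nt K)
  (hK : (0 < K)%N) (hNt : (0 < Nt)%N)
  (hgam : forall k, 0 < gam s k) (hsig : 0 < sig2 s) (hP : 0 < pow s)
  (halpha : 0 < alph s) (heta : 0 < etamc s)
  (v : 'cV[R]_K.+1) (f : 'cV[R[i]]_(dimn Nt K))
  (hv : v != 0) (hf : f != 0) (hB : Bmat s f v \in unitmx) :
  wgrad (fun g => obj s g v) f = 0
  <-> invmx (Bmat s f v) *m Amat s f v *m f = rC (lam s f v) *: f.
Proof.
rewrite (@wgrad_eq _ _ _ s hK hgam hsig hP halpha f v hf).
have hn : 0 < lam_num s f v by apply: prodr_gt0 => j _; apply: expR_gt0.
have hd : 0 < lam_den s f v by apply: expR_gt0.
have c0 : - (2 / ln 2) != 0 :> R by rewrite oppr_eq0 mulf_neq0 // invr_eq0 gt_eqF // ln2_gt0.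
rewrite (AmatE s f v) (BmatE s f v).
rewrite (BmatE s f v) in hB.
rewrite /lam.
move: (Atil s f v) (Btil s f v) (lam_num s f v) (lam_den s f v) hn hd hB => A B ln ld hn hd hB.
exact: final_alg.
Qed.
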